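(* Let $t,n\geq 1$ be integers and let $x,y\in\{0,1\}^{tn}$, with coordinates of $y$ indexed $0,1,\ldots,tn-1$. There exists $i<n$ such that $\mathsf{Rot}^{it}(y)<_{\mathrm{lex}}x$ if and only if at least one of the following holds: (1) there exists $w\in L_x$ such that $w$ appears as a contiguous substring of $y$ starting at a coordinate $j$ with $j\equiv 0\pmod t$; (2) there exist strings $w_1,w_2$ such that $w_1w_2\in L_x$, $w_2$ is a prefix of $y$, $w_1$ is a suffix of $y$, and $|w_1|\equiv 0\pmod t$.
   Context: $\mathsf{Rot}^k(y)$ denotes the string obtained from $y$ by cyclically rotating it rightwards by $k$ positions. $<_{\mathrm{lex}}$ is the lexicographic order on binary strings of equal length with $0<1$. For $x\in\{0,1\}^{m}$, the set of witnesses is $L_x=\{s0 : s1\text{ is a prefix of }x\}$. *)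

(* Defs.v *)
From mathcomp Require Import all_boot.
Set Implicit Arguments. Unset Strict Implicit. Unset Printing Implicit Defensive.

(* Binary strings are bitseq = seq bool, with false = 0 and true = 1. *)

Definition Rot (k : nat) (y : bitseq) : bitseq := rotr k y.

(* Strict lexicographic order on binary strings (0 < 1); intended for equal lengths. *)
Fixpoint lexlt (a b : bitseq) : bool :=
  match a, b with
  | x :: a', y :: b' => (~~ x && y) || ((x == y) && lexlt a' b')
  | _, _ => false
  end.

Definition inL (x w : bitseq) : Prop :=
  exists s : bitseq, prefix (rcons s true) x /\ w = rcons s false.

Definition occurs_at (w y : bitseq) (j : nat) : Prop :=
  j + size w <= size y /\ take (size w) (drop j y) = w.

(* Main.v *)
Require Import Defs.
From mathcomp Require Import all_boot.
From mathcomp Require Import zify.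

Lemma lexltP a b : lexlt a b <->
  exists s, prefix (rcons s true) b /\ prefix (rcons s false) a.
Proof.
elim: a b => [|x a IH] [|y b] /=.
- by split=> // -[[|? ?] []].
- by split=> // -[[|? ?] []].
- by split=> // -[[|? ?] []].
split.
  case/orP.
    by case: x; case: y => //= _; exists [::]; rewrite /= ?prefix0s.
  case/andP=> /eqP <- /IH [s [h1 h2]]; exists (x :: s) => /=.
  by rewrite eqxx h1 h2.
case=> -[|z s] /= [].
  by move=> /andP[/eqP <- _] /andP[/eqP <- _].
move=> /andP[/eqP <- h1] /andP[/eqP <- h2].
by rewrite eqxx /=; apply/orP; right; apply/IH; exists s.
Qed.

Lemma rotj (t n : nat) (y : bitseq) j : 1 <= t -> 1 <= n -> size y = t * n ->
  j <= t * n -> j %% t = 0 -> exists i, i < n /\ Rot (i * t) y = rot j y.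
Proof.
move=> t1 n1 sy jN jt.
have dj : t %| j by rewrite /dvdn jt.
set m := j %/ t.
have ej : m * t = j by rewrite divnK.
have mn : m <= n.
  by rewrite -(@leq_pmul2r t) // ej mulnC.
have [m0|mpos] := posnP m.
  exists 0; split; first by lia.
  rewrite /Rot /rotr mul0n subn0 sy -ej m0 mul0n rot0.
  by rewrite rot_oversize ?sy.
have [mN|mlt] := eqVneq m n.
  exists 0; split; first by lia.
  rewrite /Rot /rotr mul0n subn0 sy.
  by rewrite !rot_oversize ?sy //; rewrite -ej mN mulnC.
exists (n - m); split; first by lia.
rewrite /Rot /rotr sy mulnBl -ej mulnC subKn //.
by rewrite leq_mul2r mn orbT.
Qed.

Theorem lemma9 (t n : nat) (x y : bitseq) :
  1 <= t -> 1 <= n -> size x = t * n -> size y = t * n ->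
  (exists i, i < n /\ lexlt (Rot (i * t) y) x) <->
  ((exists w j, inL x w /\ j %% t = 0 /\ occurs_at w y j) \/
   (exists w1 w2, inL x (w1 ++ w2) /\ prefix w2 y /\ suffix w1 y /\
                  size w1 %% t = 0)).
Proof.
move=> t1 n1 sx sy; split.
  case=> i [lin /lexltP [s [h1 h2]]].
  move: h2; rewrite /Rot /rotr sy /rot.
  set k := t * n - i * t.
  have kt : k %% t = 0.
    by rewrite /k mulnC -mulnBl modnMl.
  rewrite prefixE take_cat.
  case: ltnP => hl.
    move=> /eqP h; left; exists (rcons s false), k; split.
      by exists s.
    split=> //; split; last exact: h.
    move: hl; rewrite size_drop sy; clearbody k; move: (t * n) (size (rcons s false)) => a b; lia.
  move=> /eqP h; right.
  exists (drop k y), (take (size (rcons s false) - size (drop k y)) (take k y)).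
  split; first by exists s; rewrite h.
  split.
    have hw : size (rcons s false) <= t * n.
      by rewrite -sx size_rcons -(size_rcons s true) size_prefix.
    have kN : k <= t * n by rewrite /k leq_subr.
    rewrite take_takel ?prefix_take //; rewrite size_drop sy.
    clearbody k; move: hw kN; move: (t * n) (size (rcons s false)) => a b; lia.
  split; first exact: suffix_drop.
  rewrite size_drop sy /k subKn ?modnMl //.
  by rewrite [t * n]mulnC leq_mul2r (ltnW lin) orbT.
case.
  case=> w [j [[s [hs ->]] [jt [jb ht]]]].
  have jN : j <= t * n by move: jb; rewrite size_rcons sy; lia.
  have [i [lin e]] := @rotj t n y j t1 n1 sy jN jt.
  exists i; split => //; rewrite e; apply/lexltP; exists s; split => //.
  by rewrite /rot; apply: prefix_catl; rewrite prefixE ht.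
case=> w1 [w2 [[s [hs hw]] [hp [hsuf hm]]]].
set j := size y - size w1.
have sw1 : size w1 <= t * n by rewrite -sy size_suffix.
have hsz : size (w1 ++ w2) <= t * n.
  by rewrite -sx hw size_rcons -(size_rcons s true) size_prefix.
have jN : j <= t * n by rewrite /j sy leq_subr.
have jt : j %% t = 0.
  apply/eqP; rewrite -/(dvdn t j) /j sy dvdn_sub //.
    by rewrite dvdn_mulr.
  by rewrite /dvdn hm.
have [i [lin e]] := @rotj t n y j t1 n1 sy jN jt.
exists i; split => //; rewrite e; apply/lexltP; exists s; split => //.
rewrite -hw /rot.
move: hsuf; rewrite suffixE => /eqP ->.
rewrite prefix_catr // eqxx /=.
move: hp; rewrite !prefixE => /eqP h.
rewrite take_takel ?h //.
move: hsz; rewrite size_cat /j sy; move: (t * n) => a. move=> H; rewrite leq_subRL ?H //; exact: leq_trans (leq_addr _ _) H.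
Qed.
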